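(* $\mathsf{AUC}_{[0,1]}\not\le_W *\text{-}\mathsf{WWKL}$.
   Context: A represented space is a pair $(X,\delta_X)$ with $\delta_X:\subseteq\mathbb{N}^\mathbb{N}\to X$ a partial surjection; $[0,1]$ carries its Cauchy representation. A realizer of $f:\subseteq X\rightrightarrows Y$ is a partial $F$ with $\delta_Y F(p)\in f(\delta_X(p))$ for all $p\in\mathrm{dom}(f\circ\delta_X)$. $f\le_W g$ if there are computable partial $H,K:\subseteq\mathbb{N}^\mathbb{N}\to\mathbb{N}^\mathbb{N}$ such that $p\mapsto H\langle p,GK(p)\rangle$ realizes $f$ for every realizer $G$ of $g$. $\mathcal{A}_-([0,1])$ denotes the closed subsets of $[0,1]$ represented by negative information (a name of $A$ enumerates rational open intervals whose union is $[0,1]\setminus A$). $\mathsf C_{[0,1]}:\subseteq\mathcal A_-([0,1])\rightrightarrows[0,1]$, $A\mapsto A$, is defined on nonempty $A$. All-or-unique choice $\mathsf{AUC}_{[0,1]}$ is $\mathsf C_{[0,1]}$ restricted to the sets $[0,1]$ and $\{x\}$, $x\in[0,1]$. $\mathrm{Tr}$ is the set of binary trees $T\subseteq\{0,1\}^*$, represented by characteristic functions; $[T]$ its set of infinite paths; $\mu$ the uniform measure on $2^\mathbb N$ ($\mu(w2^\mathbb N)=2^{-|w|}$). $*\text{-}\mathsf{WWKL}:\subseteq\mathbb N\times\mathrm{Tr}\rightrightarrows2^\mathbb N$, $(n,T)\mapsto[T]$, has domain $\{(n,T):\mu([T])>2^{-n}\}$. *)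

(* Defs.v *)
From Stdlib Require Import Reals QArith Qreals List Arith Cantor.
Import ListNotations.
Open Scope R_scope.

Definition baire := nat -> nat.

Definition bpair (p q : baire) : baire :=
  fun k => if Nat.even k then p (Nat.div2 k) else q (Nat.div2 k).

Inductive term : Type :=
| TZero : term
| TSucc : term
| TProj : nat -> term
| TOrc : term
| TComp : term -> list term -> term
| TRec : term -> term -> term
| TMu : term -> term.

Inductive eval (p : baire) : term -> list nat -> nat -> Prop :=
| eZero xs : eval p TZero xs 0
| eSucc xs : eval p TSucc xs (S (hd 0%nat xs))
| eProj i xs : eval p (TProj i) xs (nth i xs 0%nat)
| eOrc xs : eval p TOrc xs (p (hd 0%nat xs))
| eComp f gs xs ys y : evals p gs xs ys -> eval p f ys y -> eval p (TComp f gs) xs y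
| eRec0 f g xs y : eval p f xs y -> eval p (TRec f g) (0%nat :: xs) y
| eRecS f g n xs r y : eval p (TRec f g) (n :: xs) r -> eval p g (n :: r :: xs) y ->
    eval p (TRec f g) (S n :: xs) y
| eMu f xs n : eval p f (n :: xs) 0%nat ->
    (forall m, (m < n)%nat -> exists k, eval p f (m :: xs) (S k)) ->
    eval p (TMu f) xs n
with evals (p : baire) : list term -> list nat -> list nat -> Prop :=
| esNil xs : evals p [] xs []
| esCons g gs xs y ys : eval p g xs y -> evals p gs xs ys -> evals p (g :: gs) xs (y :: ys).

Record pfun : Type := { pdom : baire -> Prop; papp : baire -> baire }.

Definition computable (F : pfun) : Prop :=
  exists e : term, forall p, pdom F p -> forall n, eval p e [n] (papp F p n).

Record rep_space : Type := { carrier : Type; name : baire -> carrier -> Prop }.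

Record mvfun (X Y : Type) : Type :=
  { mdom : X -> Prop; mval : X -> Y -> Prop }.
Arguments mdom {X Y}.
Arguments mval {X Y}.

Definition realizes (X Y : rep_space) (F : pfun) (f : mvfun (carrier X) (carrier Y)) : Prop :=
  forall p x, name X p x -> mdom f x ->
    pdom F p /\ exists y, name Y (papp F p) y /\ mval f x y.

Definition wcomp (H G K : pfun) : pfun :=
  {| pdom := fun p => pdom K p /\ pdom G (papp K p) /\
                      pdom H (bpair p (papp G (papp K p)));
     papp := fun p => papp H (bpair p (papp G (papp K p))) |}.

Definition weihrauch_le (X Y Z W : rep_space)
  (f : mvfun (carrier X) (carrier Y)) (g : mvfun (carrier Z) (carrier W)) : Prop :=
  exists H K : pfun, computable H /\ computable K /\
    forall G : pfun, realizes Z W G g -> realizes X Y (wcomp H G K) f.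

Definition zdec (n : nat) : Z :=
  if Nat.even n then Z.of_nat (Nat.div2 n) else (- Z.of_nat (S (Nat.div2 n)))%Z.
Definition decQ (n : nat) : Q :=
  let (a, b) := Cantor.of_nat n in Qmake (zdec a) (Pos.of_succ_nat b).

Definition unit_interval : rep_space :=
  {| carrier := R;
     name := fun p x => 0 <= x <= 1 /\
                        forall n, Rabs (Q2R (decQ (p n)) - x) <= (/ 2) ^ n |}.

Definition in_interval (n : nat) (x : R) : Prop :=
  let (a, b) := Cantor.of_nat n in Q2R (decQ a) < x < Q2R (decQ b).

Definition closed_neg : rep_space :=
  {| carrier := R -> Prop;
     name := fun p A => (forall x, A x -> 0 <= x <= 1) /\
                        forall x, 0 <= x <= 1 -> (~ A x <-> exists n, in_interval (p n) x) |}.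

Definition nat_space : rep_space :=
  {| carrier := nat; name := fun p n => p 0%nat = n |}.

(** binary words coded bijectively by naturals *)
Fixpoint enc (w : list bool) : nat :=
  match w with
  | [] => 0%nat
  | b :: w' => (2 * enc w' + 1 + (if b then 1 else 0))%nat
  end.

Definition isTree (T : list bool -> bool) : Prop :=
  forall w u, T (w ++ u) = true -> T w = true.

Definition tree_space : rep_space :=
  {| carrier := list bool -> bool;
     name := fun p T => isTree T /\
                        forall w, p (enc w) = (if T w then 1 else 0)%nat |}.

Definition prod_space (X Y : rep_space) : rep_space :=
  {| carrier := (carrier X * carrier Y)%type;
     name := fun r xy => name X (fun k => r (2 * k)%nat) (fst xy) /\
                         name Y (fun k => r (2 * k + 1)%nat) (snd xy) |}.

Definition cantor_space : rep_space :=
  {| carrier := nat -> bool;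
     name := fun p X => forall n, p n = (if X n then 1 else 0)%nat |}.

Definition prefix (X : nat -> bool) (k : nat) : list bool := map X (seq 0 k).
Definition path (T : list bool -> bool) (X : nat -> bool) : Prop :=
  forall k, T (prefix X k) = true.

Fixpoint words (k : nat) : list (list bool) :=
  match k with
  | O => [[]]
  | S k' => map (cons false) (words k') ++ map (cons true) (words k')
  end.

(** mu(union of cylinders [w], w in T, |w| = k) = #{w in T : |w| = k} / 2^k *)
Definition level_measure (T : list bool -> bool) (k : nat) : R :=
  INR (length (filter T (words k))) / 2 ^ k.

(** mu([T]) > r, where mu([T]) = lim_k level_measure T k (continuity from above) *)
Definition measure_paths_gt (T : list bool -> bool) (r : R) : Prop :=
  exists l, Un_cv (level_measure T) l /\ r < l.

Definition AUC : mvfun (R -> Prop) R :=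
  {| mdom := fun A => (forall y, A y <-> 0 <= y <= 1) \/
                      (exists x, 0 <= x <= 1 /\ forall y, A y <-> y = x);
     mval := fun A x => A x |}.

Definition star_WWKL : mvfun (nat * (list bool -> bool)) (nat -> bool) :=
  {| mdom := fun nT => isTree (snd nT) /\ measure_paths_gt (snd nT) ((/ 2) ^ fst nT);
     mval := fun nT X => path (snd nT) X |}.

(* Main.v *)
Require Import Defs.
From Stdlib Require Import Reals QArith Qreals List Lia Lra Arith Cantor ZArith.
From Stdlib Require Import Classical ClassicalEpsilon FunctionalExtensionality.
Import ListNotations.

Section EvInd.
Variable p : baire.
Variable P : term -> list nat -> nat -> Prop.
Variable Q : list term -> list nat -> list nat -> Prop.
Hypothesis HZ : forall xs, P TZero xs 0.
Hypothesis HS : forall xs, P TSucc xs (S (hd 0%nat xs)).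
Hypothesis HP : forall i xs, P (TProj i) xs (nth i xs 0%nat).
Hypothesis HO : forall xs, P TOrc xs (p (hd 0%nat xs)).
Hypothesis HC : forall f gs xs ys y, evals p gs xs ys -> Q gs xs ys -> eval p f ys y -> P f ys y -> P (TComp f gs) xs y.
Hypothesis HR0 : forall f g xs y, eval p f xs y -> P f xs y -> P (TRec f g) (0%nat :: xs) y.
Hypothesis HRS : forall f g n xs r y, eval p (TRec f g) (n :: xs) r -> P (TRec f g) (n :: xs) r ->
   eval p g (n :: r :: xs) y -> P g (n :: r :: xs) y -> P (TRec f g) (S n :: xs) y.
Hypothesis HM : forall f xs n, eval p f (n :: xs) 0%nat -> P f (n :: xs) 0%nat ->
   (forall m, (m < n)%nat -> exists k, eval p f (m :: xs) (S k) /\ P f (m :: xs) (S k)) ->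
   P (TMu f) xs n.
Hypothesis QN : forall xs, Q [] xs [].
Hypothesis QC : forall g gs xs y ys, eval p g xs y -> P g xs y -> evals p gs xs ys -> Q gs xs ys -> Q (g :: gs) xs (y :: ys).

Fixpoint evi e xs y (H : eval p e xs y) {struct H} : P e xs y :=
  match H in eval _ e xs y return P e xs y with
  | eZero _ xs => HZ xs
  | eSucc _ xs => HS xs
  | eProj _ i xs => HP i xs
  | eOrc _ xs => HO xs
  | eComp _ f gs xs ys y H1 H2 => HC f gs xs ys y H1 (evsi _ _ _ H1) H2 (evi _ _ _ H2)
  | eRec0 _ f g xs y H1 => HR0 f g xs y H1 (evi _ _ _ H1)
  | eRecS _ f g n xs r y H1 H2 => HRS f g n xs r y H1 (evi _ _ _ H1) H2 (evi _ _ _ H2)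
  | eMu _ f xs n H0 Hl => HM f xs n H0 (evi _ _ _ H0)
      (fun m Hm => match Hl m Hm with ex_intro _ k Hk => ex_intro _ k (conj Hk (evi _ _ _ Hk)) end)
  end
with evsi gs xs ys (H : evals p gs xs ys) {struct H} : Q gs xs ys :=
  match H in evals _ gs xs ys return Q gs xs ys with
  | esNil _ xs => QN xs
  | esCons _ g gs xs y ys H1 H2 => QC g gs xs y ys H1 (evi _ _ _ H1) H2 (evsi _ _ _ H2)
  end.
End EvInd.

Definition agree (U : nat) (p q : baire) := forall i, (i < U)%nat -> p i = q i.

Lemma agree_mono U V p q : (U <= V)%nat -> agree V p q -> agree U p q.
Proof. intros H1 H2 i Hi. apply H2. lia. Qed.

Lemma fin_max (n : nat) (R : nat -> nat -> Prop) :
  (forall m U V, (U <= V)%nat -> R m U -> R m V) ->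
  (forall m, (m < n)%nat -> exists U, R m U) -> exists U, forall m, (m < n)%nat -> R m U.
Proof.
  intros Hmono. induction n as [|n IH]; intros H.
  - exists 0%nat. intros m Hm. lia.
  - destruct IH as [U HU]. { intros m Hm. apply H. lia. }
    destruct (H n (Nat.lt_succ_diag_r n)) as [V HV].
    exists (Nat.max U V). intros m Hm.
    destruct (Nat.eq_dec m n) as [->|Hne].
    + apply (Hmono n V); [lia|exact HV].
    + apply (Hmono m U); [lia|]. apply HU. lia.
Qed.

Lemma eval_det p e xs y : eval p e xs y -> forall y', eval p e xs y' -> y' = y.
Proof.
  revert e xs y.
  apply (evi p (fun e xs y => forall y', eval p e xs y' -> y' = y)
             (fun gs xs ys => forall ys', evals p gs xs ys' -> ys' = ys)).
  - intros xs y' H; inversion H; auto.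
  - intros xs y' H; inversion H; auto.
  - intros i xs y' H; inversion H; auto.
  - intros xs y' H; inversion H; auto.
  - intros f gs xs ys y H1 IH1 H2 IH2 y' H. inversion H; subst.
    match goal with Ha : evals _ gs _ _ |- _ => apply IH1 in Ha end. subst. apply IH2. auto.
  - intros f g xs y H1 IH1 y' H. inversion H; subst. auto.
  - intros f g n xs r y H1 IH1 H2 IH2 y' H. inversion H; subst.
    match goal with Ha : eval _ (TRec f g) _ _ |- _ => apply IH1 in Ha end. subst. apply IH2. auto.
  - intros f xs n H0 IH0 Hl y' H. inversion H; subst.
    destruct (Nat.lt_total y' n) as [Hlt|[Heq|Hgt]].
    + destruct (Hl y' Hlt) as [k [_ Hk]].
      match goal with Ha : eval _ f (y' :: _) 0 |- _ => apply Hk in Ha end. discriminate.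
    + exact Heq.
    + match goal with Ha : forall m, (m < y')%nat -> _ |- _ => destruct (Ha n Hgt) as [k Hk] end.
      apply IH0 in Hk. discriminate.
  - intros xs ys' H; inversion H; auto.
  - intros g gs xs y ys H1 IH1 H2 IH2 ys' H. inversion H; subst.
    match goal with Ha : eval _ g _ _, Hb : evals _ gs _ _ |- _ => apply IH1 in Ha; apply IH2 in Hb end.
    subst. auto.
Qed.

Lemma eval_cont p e xs y : eval p e xs y ->
  exists U, forall p', agree U p' p -> eval p' e xs y.
Proof.
  revert e xs y.
  apply (evi p (fun e xs y => exists U, forall p', agree U p' p -> eval p' e xs y)
             (fun gs xs ys => exists U, forall p', agree U p' p -> evals p' gs xs ys)).
  - intros xs. exists 0%nat. intros; constructor.
  - intros xs. exists 0%nat. intros; constructor.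
  - intros i xs. exists 0%nat. intros; constructor.
  - intros xs. exists (S (hd 0%nat xs)). intros p' Ha.
    rewrite <- (Ha (hd 0%nat xs)) by lia. constructor.
  - intros f gs xs ys y _ [U1 H1] _ [U2 H2]. exists (Nat.max U1 U2). intros p' Ha.
    econstructor; [apply H1|apply H2]; eapply agree_mono; try eassumption; lia.
  - intros f g xs y _ [U1 H1]. exists U1. intros. constructor. auto.
  - intros f g n xs r y _ [U1 H1] _ [U2 H2]. exists (Nat.max U1 U2). intros p' Ha.
    econstructor; [apply H1|apply H2]; eapply agree_mono; try eassumption; lia.
  - intros f xs n _ [U0 H0] Hl.
    destruct (fin_max n (fun m U => exists k, forall p', agree U p' p -> eval p' f (m :: xs) (S k)))
      as [U1 HU1].
    + intros m U V HUV [k Hk]. exists k. intros p' Ha. apply Hk. eapply agree_mono; eauto.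
    + intros m Hm. destruct (Hl m Hm) as [k [_ [U Hk]]]. exists U, k. exact Hk.
    + exists (Nat.max U0 U1). intros p' Ha. constructor.
      * apply H0. apply (agree_mono U0 (Nat.max U0 U1)); [lia|exact Ha].
      * intros m Hm. destruct (HU1 m Hm) as [k Hk]. exists k. apply Hk.
        apply (agree_mono U1 (Nat.max U0 U1)); [lia|exact Ha].
  - intros xs. exists 0%nat. intros; constructor.
  - intros g gs xs y ys _ [U1 H1] _ [U2 H2]. exists (Nat.max U1 U2). intros p' Ha.
    constructor; [apply H1|apply H2]; eapply agree_mono; try eassumption; lia.
Qed.

Definition count (P : list bool -> bool) k := length (filter P (words k)).

Lemma filter_map_len {A B} (P : B -> bool) (f : A -> B) l :
  length (filter P (map f l)) = length (filter (fun x => P (f x)) l).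
Proof. induction l; simpl; auto. destruct (P (f a)); simpl; auto. Qed.

Lemma count_S P k : count P (S k) = (count (fun w => P (false :: w)) k + count (fun w => P (true :: w)) k)%nat.
Proof. unfold count. simpl. rewrite filter_app, length_app, !filter_map_len. reflexivity. Qed.

Lemma words_len k w : In w (words k) -> length w = k.
Proof.
  revert w; induction k; simpl; intros w H.
  - destruct H as [<-|[]]; auto.
  - apply in_app_or in H. destruct H as [H|H]; apply in_map_iff in H; destruct H as [w' [<- H]];
    simpl; f_equal; auto.
Qed.

Lemma in_words w : In w (words (length w)).
Proof.
  induction w as [|b w IH]; simpl; auto.
  apply in_or_app. destruct b; [right|left]; apply in_map; auto.
Qed.

Lemma count_le P k : (count P k <= 2 ^ k)%nat.
Proof.
  revert P; induction k; intros P.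
  - unfold count; simpl. destruct (P []); simpl; lia.
  - rewrite count_S. simpl. specialize (IHk (fun w => P (false :: w))) as H1.
    specialize (IHk (fun w => P (true :: w))). lia.
Qed.



Lemma count_zero P k : (forall w, length w = k -> P w = false) -> count P k = 0%nat.
Proof.
  intros H. unfold count.
  assert (forall l, (forall w, In w l -> length w = k) -> filter P l = []) as G.
  { induction l as [|a l IH]; simpl; intros Hl; auto. rewrite H by (apply Hl; auto). apply IH. auto. }
  rewrite G; auto. apply words_len.
Qed.

Lemma count_pos P k : (0 < count P k)%nat -> exists w, length w = k /\ P w = true.
Proof.
  intros H. destruct (classic (exists w, length w = k /\ P w = true)) as [E|E]; auto.
  rewrite count_zero in H; [lia|]. intros w Hw. destruct (P w) eqn:Pw; auto. exfalso; apply E; eauto.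
Qed.

Lemma count_ext L : forall d P Q,
  (forall w, length w = (L + d)%nat -> P w = true -> Q (firstn L w) = true) ->
  (count P (L + d) <= count Q L * 2 ^ d)%nat.
Proof.
  induction L as [|L IH]; intros d P Q H.
  - simpl. unfold count at 2. simpl. destruct (Q []) eqn:Eq; simpl.
    + pose proof (count_le P d). lia.
    + rewrite count_zero; [lia|]. intros w Hw. destruct (P w) eqn:Pw; auto.
      specialize (H w Hw Pw). simpl in H. congruence.
  - simpl plus. rewrite !count_S.
    pose proof (IH d (fun w => P (false :: w)) (fun w => Q (false :: w))) as H1.
    pose proof (IH d (fun w => P (true :: w)) (fun w => Q (true :: w))) as H2.
    assert (forall b, (forall w, length w = (L + d)%nat -> P (b :: w) = true -> Q (b :: firstn L w) = true)) as Hb.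
    { intros b w Hw Hp. apply (H (b :: w)); simpl; auto. }
    specialize (H1 (Hb false)). specialize (H2 (Hb true)). nia.
Qed.

Section Koenig.
Variable T : list bool -> bool.
Hypothesis HT : isTree T.

Definition ext (w : list bool) := forall d, exists u, length u = d /\ T (w ++ u) = true.

Lemma ext_step w : ext w -> ext (w ++ [false]) \/ ext (w ++ [true]).
Proof.
  intros H. apply NNPP. intros Hn. apply not_or_and in Hn. destruct Hn as [H0 H1].
  apply not_all_ex_not in H0, H1. destruct H0 as [d0 H0]. destruct H1 as [d1 H1].
  destruct (H (S (Nat.max d0 d1))) as [u [Hu Hw]].
  destruct u as [|b u]; [simpl in Hu; lia|]. simpl in Hu.
  destruct b.
  - apply H1. exists (firstn d1 u). split. { rewrite length_firstn. lia. }
    apply (HT _ (skipn d1 u)). rewrite <- !app_assoc. simpl. rewrite firstn_skipn. exact Hw.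
  - apply H0. exists (firstn d0 u). split. { rewrite length_firstn. lia. }
    apply (HT _ (skipn d0 u)). rewrite <- !app_assoc. simpl. rewrite firstn_skipn. exact Hw.
Qed.

Definition knext (w : list bool) : list bool :=
  if excluded_middle_informative (ext (w ++ [false])) then w ++ [false] else w ++ [true].

Fixpoint kf (k : nat) : list bool := match k with O => [] | S k => knext (kf k) end.

Lemma kf_ext : ext [] -> forall k, ext (kf k) /\ length (kf k) = k.
Proof.
  intros H0 k. induction k as [|k [IH1 IH2]]; simpl; auto.
  unfold knext. destruct (excluded_middle_informative (ext (kf k ++ [false]))) as [E|E].
  - split; auto. rewrite length_app; simpl; lia.
  - split. { destruct (ext_step _ IH1); tauto. } rewrite length_app; simpl; lia.
Qed.

Lemma kf_S k : exists b, kf (S k) = kf k ++ [b].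
Proof. simpl. unfold knext. destruct (excluded_middle_informative _); eauto. Qed.

Lemma koenig : (forall l, exists w, length w = l /\ T w = true) -> exists X, path T X.
Proof.
  intros Hl. assert (ext []) as H0.
  { intros d. destruct (Hl d) as [w [Hw Tw]]. exists w. auto. }
  exists (fun i => nth i (kf (S i)) false).
  assert (forall k, prefix (fun i => nth i (kf (S i)) false) k = kf k) as Hp.
  { induction k as [|k IH]; auto. unfold prefix in *. rewrite seq_S, map_app, IH. cbn [map plus].
    destruct (kf_S k) as [b Hb]. rewrite Hb. f_equal. f_equal.
    rewrite app_nth2; destruct (kf_ext H0 k) as [_ Hk]; rewrite Hk; [|lia].
    rewrite Nat.sub_diag. reflexivity. }
  intros k. rewrite Hp. destruct (kf_ext H0 k) as [Hk _]. destruct (Hk 0%nat) as [u [Hu Tu]].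
  destruct u; [|simpl in Hu; lia]. rewrite app_nil_r in Tu. exact Tu.
Qed.

Lemma koenig_contra : ~ (exists X, path T X) -> exists l, forall w, length w = l -> T w = false.
Proof.
  intros H. apply NNPP. intros Hn. apply H. apply koenig. intros l.
  apply NNPP. intros Hm. apply Hn. exists l. intros w Hw. destruct (T w) eqn:E; auto.
  exfalso. apply Hm. eauto.
Qed.
End Koenig.

Open Scope R_scope.

Lemma lim_le (u : nat -> R) l c N : Un_cv u l -> (forall m, (m >= N)%nat -> u m <= c) -> l <= c.
Proof.
  intros Hc Hb. destruct (Rle_or_lt l c) as [?|Hlt]; auto.
  destruct (Hc (l - c)) as [N0 HN]; [lra|].
  specialize (HN (Nat.max N N0) ltac:(lia)). specialize (Hb (Nat.max N N0) ltac:(lia)).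
  unfold Rdist in HN. apply Rabs_def2 in HN. lra.
Qed.

Lemma half_pow_pos n : 0 < (/ 2) ^ n.
Proof. apply pow_lt. lra. Qed.

Lemma half_pow_eq n : (/ 2) ^ n = / 2 ^ n.
Proof. apply pow_inv. Qed.

Lemma lm_le_gen (c k m n : nat) : (c <= 2 ^ m)%nat -> (m + n = k)%nat -> INR c / 2 ^ k <= (/ 2) ^ n.
Proof.
  intros Hc Hk. subst k. apply le_INR in Hc. rewrite pow_INR in Hc. replace (INR 2) with 2 in Hc by (simpl; lra).
  rewrite pow_add. rewrite half_pow_eq.
  assert (0 < 2 ^ m) by (apply pow_lt; lra). assert (0 < 2 ^ n) by (apply pow_lt; lra).
  unfold Rdiv. rewrite Rinv_mult.
  apply Rle_trans with (2 ^ m * (/ 2 ^ m * / 2 ^ n)).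
  - apply Rmult_le_compat_r; auto. apply Rmult_le_pos; left; apply Rinv_0_lt_compat; auto.
  - rewrite <- Rmult_assoc, Rinv_r by lra. lra.
Qed.

Lemma zdec_even j : zdec (2 * j) = Z.of_nat j.
Proof. unfold zdec. rewrite Nat.even_even, Nat.div2_double. reflexivity. Qed.

Lemma decQ_val a b : Q2R (decQ (Cantor.to_nat (a, b))) = IZR (zdec a) / INR (S b).
Proof.
  unfold decQ. rewrite cancel_of_to. unfold Q2R. simpl.
  rewrite Zpos_P_of_succ_nat, <- Nat2Z.inj_succ, <- INR_IZR_INZ. reflexivity.
Qed.

Lemma in_interval_code a b x : in_interval (Cantor.to_nat (a, b)) x <->
  Q2R (decQ a) < x < Q2R (decQ b).
Proof. unfold in_interval. rewrite cancel_of_to. tauto. Qed.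

Lemma in_interval0 x : ~ in_interval 0 x.
Proof.
  unfold in_interval. change (Cantor.of_nat 0) with (0%nat, 0%nat).
  unfold decQ. change (Cantor.of_nat 0) with (0%nat, 0%nat). unfold Q2R. simpl. lra.
Qed.

Definition qm1 := Cantor.to_nat (1%nat, 0%nat).
Definition qp2 := Cantor.to_nat (4%nat, 0%nat).
Definition qx (n j : nat) := Cantor.to_nat ((2 * j)%nat, (2 ^ n - 1)%nat).
Definition xj (n j : nat) : R := INR j * (/ 2) ^ n.

Lemma qm1_val : Q2R (decQ qm1) = -1.
Proof. unfold qm1. rewrite decQ_val. replace (zdec 1) with (-1)%Z by reflexivity. simpl INR. lra. Qed.
Lemma qp2_val : Q2R (decQ qp2) = 2.
Proof. unfold qp2. rewrite decQ_val. replace (zdec 4) with 2%Z by reflexivity. simpl INR. lra. Qed.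
Lemma qx_val n j : Q2R (decQ (qx n j)) = xj n j.
Proof.
  unfold qx, xj. rewrite decQ_val, zdec_even, <- INR_IZR_INZ.
  assert (S (2 ^ n - 1) = 2 ^ n)%nat as ->.
  { pose proof (Nat.pow_nonzero 2 n ltac:(lia)). lia. }
  rewrite pow_INR, half_pow_eq. reflexivity.
Qed.

Lemma xj_range n j : (j < 2 ^ n)%nat -> 0 <= xj n j <= 1.
Proof.
  intros Hj. unfold xj. pose proof (half_pow_pos n). split.
  - apply Rmult_le_pos; [apply pos_INR|lra].
  - apply lt_INR in Hj. rewrite pow_INR in Hj. replace (INR 2) with 2 in Hj by (simpl; lra). rewrite half_pow_eq in *.
    assert (0 < 2 ^ n) by (apply pow_lt; lra).
    apply Rmult_le_reg_r with (2 ^ n); auto. rewrite Rmult_assoc, Rinv_l by lra. lra.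
Qed.

Lemma xj_disj n j j' q : Rabs (q - xj n j) <= (/ 2) ^ (n + 2) -> Rabs (q - xj n j') <= (/ 2) ^ (n + 2) -> j = j'.
Proof.
  intros H1 H2. destruct (Nat.eq_dec j j') as [|Hne]; auto. exfalso.
  rewrite pow_add in H1, H2. pose proof (half_pow_pos n).
  assert (Rabs (xj n j - xj n j') <= (/2)^n / 2).
  { replace (xj n j - xj n j') with ((q - xj n j') - (q - xj n j)) by ring.
    eapply Rle_trans; [apply Rabs_triang|]. rewrite Rabs_Ropp. simpl in H1, H2. lra. }
  unfold xj in H0. rewrite <- Rmult_minus_distr_r, Rabs_mult, (Rabs_right ((/2)^n)) in H0 by lra.
  assert (1 <= Rabs (INR j - INR j')).
  { destruct (Nat.lt_gt_cases j j') as [[Hl|Hl] _]; auto.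
    - assert (Hl' : (S j <= j')%nat) by lia. apply le_INR in Hl'. rewrite S_INR in Hl'.
      rewrite Rabs_left by lra. lra.
    - assert (Hl' : (S j' <= j)%nat) by lia. apply le_INR in Hl'. rewrite S_INR in Hl'.
      rewrite Rabs_right by lra. lra. }
  nra.
Qed.

Definition NT := prod_space nat_space tree_space.
Definition validq (q : baire) := exists x, name NT q x /\ mdom star_WWKL x.
Definition Tq (q : baire) (w : list bool) : bool := Nat.eqb (q (2 * enc w + 1)%nat) 1%nat.

Lemma name_Tq q x : name NT q x -> snd x = Tq q /\ fst x = q 0%nat.
Proof.
  intros [H1 [H2 H3]]. split.
  - apply functional_extensionality. intros w. unfold Tq. pose proof (H3 w) as E. cbv beta in E. rewrite E.
    destruct (snd x w); reflexivity.
  - symmetry. exact H1.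
Qed.

Lemma valid_info q : validq q -> isTree (Tq q) /\ measure_paths_gt (Tq q) ((/2)^(q 0%nat)).
Proof. intros [x [Hn [Ht Hm]]]. destruct (name_Tq q x Hn) as [E1 E2]. rewrite <- E1, <- E2. auto. Qed.

Lemma tree_firstn T w l : isTree T -> T w = true -> T (firstn l w) = true.
Proof. intros HT Hw. apply (HT _ (skipn l w)). rewrite firstn_skipn. auto. Qed.

Lemma level_measure_count T m : level_measure T m = INR (count T m) / 2 ^ m.
Proof. reflexivity. Qed.

Lemma valid_levels T n : isTree T -> measure_paths_gt T ((/2)^n) ->
  forall l, exists w, length w = l /\ T w = true.
Proof.
  intros HT [lim [Hc Hlt]] l. apply NNPP. intros Hn.
  assert (forall m, (m >= l)%nat -> level_measure T m <= (/2)^n) as Hb.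
  { intros m Hm. rewrite level_measure_count.
    rewrite count_zero. { simpl. unfold Rdiv. rewrite Rmult_0_l. left; apply half_pow_pos. }
    intros w Hw. destruct (T w) eqn:E; auto. exfalso. apply Hn. exists (firstn l w). split.
    - rewrite length_firstn. lia.
    - apply tree_firstn; auto. }
  pose proof (lim_le _ _ _ _ Hc Hb). lra.
Qed.

Lemma valid_path q : validq q -> exists X, path (Tq q) X.
Proof.
  intros Hv. destruct (valid_info q Hv) as [HT Hm]. apply koenig; auto.
  eapply valid_levels; eauto.
Qed.

Definition cod (X : nat -> bool) : baire := fun i => if X i then 1%nat else 0%nat.
Definition choosepath (q : baire) : nat -> bool :=
  match excluded_middle_informative (exists X, path (Tq q) X) with
  | left h => proj1_sig (constructive_indefinite_description _ h)
  | right _ => fun _ => false end.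

Lemma choosepath_spec q : validq q -> path (Tq q) (choosepath q).
Proof.
  intros Hv. unfold choosepath. destruct (excluded_middle_informative _) as [h|h].
  - exact (proj2_sig (constructive_indefinite_description _ h)).
  - exfalso. apply h. apply valid_path; auto.
Qed.

Definition Gw (qs : baire) (Y : nat -> bool) : pfun :=
  {| pdom := validq;
     papp := fun q => if excluded_middle_informative (q = qs) then cod Y else cod (choosepath q) |}.

Lemma Gw_at qs Y : papp (Gw qs Y) qs = cod Y.
Proof. simpl. destruct (excluded_middle_informative (qs = qs)); congruence. Qed.

Lemma Gw_ne qs Y p : p <> qs -> papp (Gw qs Y) p = cod (choosepath p).
Proof. intros H. simpl. destruct (excluded_middle_informative (p = qs)); congruence. Qed.

Lemma Gw_real qs Y : (validq qs -> path (Tq qs) Y) -> realizes NT cantor_space (Gw qs Y) star_WWKL.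
Proof.
  intros HY p x Hn Hd. assert (validq p) as Hv by (exists x; auto). split; [exact Hv|].
  destruct (name_Tq p x Hn) as [E1 _].
  destruct (excluded_middle_informative (p = qs)) as [E|Hne].
  - subst p. rewrite Gw_at. exists Y. split. { intros m. reflexivity. }
    change (path (snd x) Y). rewrite E1. auto.
  - rewrite Gw_ne by auto. exists (choosepath p). split. { intros m; reflexivity. }
    change (path (snd x) (choosepath p)). rewrite E1. apply choosepath_spec; auto.
Qed.

Lemma enc_bound w : (enc w + 2 <= 2 ^ (length w + 1))%nat.
Proof.
  induction w as [|b w IH]; [simpl; lia|]. cbn [enc length].
  replace (S (length w) + 1)%nat with (S (length w + 1)) by lia. rewrite Nat.pow_succ_r'. destruct b; lia.
Qed.

Definition wfun (w : list bool) : baire := fun i => if nth i w false then 1%nat else 0%nat.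

Lemma div2_lt i U : (i < U)%nat -> (Nat.div2 i < U)%nat.
Proof. pose proof (Nat.le_div2_diag_l i). lia. Qed.

Lemma length_prefix Y U : length (prefix Y U) = U.
Proof. unfold prefix. rewrite length_map, length_seq. reflexivity. Qed.

Lemma wfun_prefix Y U i : (i < U)%nat -> wfun (prefix Y U) i = cod Y i.
Proof.
  intros Hi. unfold wfun, prefix, cod.
  rewrite nth_indep with (d' := Y 0%nat) by (rewrite length_map, length_seq; lia).
  rewrite map_nth, seq_nth by lia. reflexivity.
Qed.

Lemma wfun_app w u i : (i < length w)%nat -> wfun (w ++ u) i = wfun w i.
Proof. intros Hi. unfold wfun. rewrite app_nth1 by auto. reflexivity. Qed.

Definition FinP (p0 : baire) (eH : term) (k : nat) (w : list bool) : Prop :=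
  exists y, forall r, agree (length w) r (bpair p0 (wfun w)) -> eval r eH [k] y.

Definition vF p0 eH k w : nat :=
  match excluded_middle_informative (FinP p0 eH k w) with
  | left h => proj1_sig (constructive_indefinite_description _ h)
  | right _ => 0%nat end.

Lemma vF_spec p0 eH k w : FinP p0 eH k w ->
  forall r, agree (length w) r (bpair p0 (wfun w)) -> eval r eH [k] (vF p0 eH k w).
Proof.
  intros Fw. unfold vF. destruct (excluded_middle_informative (FinP p0 eH k w)) as [h|h]; [|contradiction].
  exact (proj2_sig (constructive_indefinite_description _ h)).
Qed.

Lemma FinP_mono p0 eH k w u : FinP p0 eH k w -> FinP p0 eH k (w ++ u).
Proof.
  intros [y Hy]. exists y. intros r Hr. apply Hy. intros i Hi.
  rewrite Hr by (rewrite length_app; lia). unfold bpair. destruct (Nat.even i); auto.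
  apply wfun_app. apply div2_lt; auto.
Qed.

Fixpoint sumn (N : nat) (f : nat -> nat) : nat :=
  match N with O => 0%nat | S N => (sumn N f + f N)%nat end.

Lemma sumn_ext N f g : (forall j, (j < N)%nat -> f j = g j) -> sumn N f = sumn N g.
Proof. induction N; simpl; intros H; auto. rewrite IHN, H; auto. Qed.

Lemma sumn_zero N f : (forall j, (j < N)%nat -> f j = 0%nat) -> sumn N f = 0%nat.
Proof. induction N; simpl; intros H; auto. rewrite IHN, H; auto. Qed.

Lemma sumn_add N f g : sumn N (fun j => f j + g j)%nat = (sumn N f + sumn N g)%nat.
Proof. induction N; simpl; auto. rewrite IHN. lia. Qed.

Lemma sumn_ge N f c : (forall j, (j < N)%nat -> (c <= f j)%nat) -> (N * c <= sumn N f)%nat.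
Proof. induction N; simpl; intros H; auto. specialize (IHN ltac:(auto)). specialize (H N ltac:(lia)). lia. Qed.

Lemma sumn_ind N (P : nat -> bool) (t : bool) :
  (forall j j', (j < N)%nat -> (j' < N)%nat -> P j = true -> P j' = true -> j = j') ->
  (forall j, (j < N)%nat -> P j = true -> t = true) ->
  (sumn N (fun j => if P j then 1 else 0) <= if t then 1 else 0)%nat.
Proof.
  induction N; simpl; intros Hd Ht; [lia|].
  destruct (P N) eqn:E.
  - rewrite sumn_zero. { rewrite (Ht N); auto. }
    intros j Hj. destruct (P j) eqn:E'; auto. specialize (Hd j N ltac:(lia) ltac:(lia) E' E). lia.
  - rewrite Nat.add_0_r. apply IHN.
    + intros j j' Hj Hj'. apply Hd; lia.
    + intros j Hj. apply Ht; lia.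
Qed.

Lemma sum_filter N (P : nat -> list bool -> bool) (T : list bool -> bool) l :
  (forall a j j', (j < N)%nat -> (j' < N)%nat -> P j a = true -> P j' a = true -> j = j') ->
  (forall a j, (j < N)%nat -> P j a = true -> T a = true) ->
  (sumn N (fun j => length (filter (P j) l)) <= length (filter T l))%nat.
Proof.
  intros Hd Ht. induction l as [|a l IH].
  - rewrite sumn_zero; auto.
  - rewrite (sumn_ext N _ (fun j => (if P j a then 1 else 0) + length (filter (P j) l))%nat).
    + rewrite sumn_add. pose proof (sumn_ind N (fun j => P j a) (T a)) as Hi.
      specialize (Hi (fun j j' => Hd a j j') (fun j => Ht a j)).
      simpl. destruct (T a); simpl in *; lia.
    + intros j _. simpl. destruct (P j a); reflexivity.
Qed.

Lemma pigeon N f c B : (sumn N f <= B)%nat -> (B < N * S c)%nat -> exists j, (j < N)%nat /\ (f j <= c)%nat.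
Proof.
  intros H1 H2. apply NNPP. intros Hn.
  assert (forall j, (j < N)%nat -> (S c <= f j)%nat).
  { intros j Hj. destruct (Nat.le_gt_cases (f j) c); [|lia]. exfalso; apply Hn; eauto. }
  pose proof (sumn_ge N f (S c) H). lia.
Qed.

Theorem theorem16p5 :
  ~ weihrauch_le closed_neg unit_interval
      (prod_space nat_space tree_space) cantor_space
      AUC star_WWKL.
Proof.
  intros [H [K [[eH cH] [[eK cK] Hred]]]].
  set (G0 := Gw (fun _ => 0%nat) (choosepath (fun _ => 0%nat))).
  assert (HG0 : realizes NT cantor_space G0 star_WWKL) by (apply Gw_real; apply choosepath_spec).
  set (p0 := fun _ : nat => 0%nat).
  set (A0 := fun y : R => 0 <= y <= 1).
  assert (Hp0 : name closed_neg p0 A0).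
  { split; [intros x Hx; exact Hx|]. intros x Hx. split.
    - intros Hn; exfalso; apply Hn; exact Hx.
    - intros [i Hi]. exfalso. exact (in_interval0 x Hi). }
  assert (Hd0 : mdom AUC A0) by (left; intros; unfold A0; tauto).
  destruct (Hred G0 HG0 p0 A0 Hp0 Hd0) as [[HK0 [Hv0 _]] _].
  set (q0 := papp K p0) in *. destruct (valid_info q0 Hv0) as [HT HmT].
  set (n := q0 0%nat) in *. set (T := Tq q0) in *. set (k := (n + 2)%nat).
  assert (ClA : forall Y, path T Y -> exists U, FinP p0 eH k (prefix Y U)).
  { intros Y HY. assert (HGY := Gw_real q0 Y (fun _ => HY)).
    destruct (Hred _ HGY p0 A0 Hp0 Hd0) as [[_ [_ HH]] _].
    change (pdom H (bpair p0 (papp (Gw q0 Y) q0))) in HH. rewrite Gw_at in HH.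
    pose proof (cH _ HH k) as Hev. destruct (eval_cont _ _ _ _ Hev) as [U HU].
    exists U. exists (papp H (bpair p0 (cod Y)) k). intros r Hr. apply HU. intros i Hi.
    rewrite Hr by (rewrite length_prefix; auto). unfold bpair. destruct (Nat.even i); auto.
    apply wfun_prefix. apply div2_lt; auto. }
  assert (ClB : exists L, (n <= L)%nat /\ forall w, length w = L -> T w = true -> FinP p0 eH k w).
  { set (S := fun w => T w && negb (if excluded_middle_informative (FinP p0 eH k w) then true else false)).
    assert (HS : isTree S).
    { intros w u Hs. unfold S in *. apply andb_prop in Hs as [H1 H2]. rewrite (HT w u H1).
      destruct (excluded_middle_informative (FinP p0 eH k w)) as [F|F]; simpl; auto.
      destruct (excluded_middle_informative (FinP p0 eH k (w ++ u))) as [F'|F']; [discriminate|].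
      exfalso; apply F'; apply FinP_mono; auto. }
    assert (Hno : ~ exists Y, path S Y).
    { intros [Y HY]. assert (path T Y) as HY'.
      { intros m; specialize (HY m); unfold S in HY; apply andb_prop in HY; tauto. }
      destruct (ClA Y HY') as [U HU]. specialize (HY U). unfold S in HY.
      destruct (excluded_middle_informative (FinP p0 eH k (prefix Y U))); [|contradiction].
      simpl in HY. rewrite andb_false_r in HY. discriminate. }
    destruct (koenig_contra S HS Hno) as [L0 HL0]. exists (L0 + n)%nat. split; [lia|].
    intros w Hw Tw. rewrite <- (firstn_skipn L0 w). apply FinP_mono.
    specialize (HL0 (firstn L0 w) ltac:(rewrite length_firstn; lia)). unfold S in HL0.
    rewrite (tree_firstn T w L0 HT Tw) in HL0.
    destruct (excluded_middle_informative (FinP p0 eH k (firstn L0 w))); auto. discriminate. }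
  destruct ClB as [L [HnL HLF]].
  set (v := vF p0 eH k).
  set (excl := fun j w => (/2)^k < Rabs (Q2R (decQ (v w)) - xj n j)).
  set (ngb := fun j w => T w && (if excluded_middle_informative (excl j w) then false else true)).
  assert (Hsum : (sumn (2 ^ n) (fun j => count (ngb j) L) <= 2 ^ L)%nat).
  { eapply Nat.le_trans; [|apply (count_le T L)]. unfold count.
    apply sum_filter.
    - intros a j j' _ _ E1 E2. unfold ngb in E1, E2.
      destruct (excluded_middle_informative (excl j a)) as [X1|X1]; [rewrite andb_false_r in E1; discriminate|].
      destruct (excluded_middle_informative (excl j' a)) as [X2|X2]; [rewrite andb_false_r in E2; discriminate|].
      unfold excl in X1, X2. apply (xj_disj n j j' (Q2R (decQ (v a)))); unfold k in X1, X2; lra.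
    - intros a j _ E. unfold ngb in E. apply andb_prop in E. tauto. }
  destruct (pigeon (2 ^ n) (fun j => count (ngb j) L) (2 ^ (L - n)) (2 ^ L) Hsum) as [j [Hj Hcj]].
  { assert (2 ^ L = 2 ^ n * 2 ^ (L - n))%nat as ->.
    { rewrite <- Nat.pow_add_r. f_equal. lia. }
    pose proof (Nat.pow_nonzero 2 n ltac:(lia)). nia. }
  simpl in Hcj.
  destruct (fin_max (2 ^ (L + 2)) (fun i U => forall p', agree U p' p0 -> eval p' eK [i] (q0 i))) as [M0 HM0].
  { intros i U V HUV HU p' Ha. apply HU. eapply agree_mono; eauto. }
  { intros i _. exact (eval_cont _ _ _ _ (cK p0 HK0 i)). }
  set (M := (M0 + L)%nat).
  set (pj := fun i => if Nat.ltb i M then 0%nat else if Nat.even i then Cantor.to_nat (qm1, qx n j)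
                      else Cantor.to_nat (qx n j, qp2)).
  set (Aj := fun y => y = xj n j).
  assert (Hpj : name closed_neg pj Aj).
  { split.
    - intros x Hx. unfold Aj in Hx. subst x. apply xj_range; auto.
    - intros x Hx. split.
      + intros Hne. destruct (Rtotal_order x (xj n j)) as [Hlt|[Heq|Hgt]]; [| contradiction |].
        * exists (2 * M)%nat. unfold pj. rewrite (proj2 (Nat.ltb_ge _ _)) by lia. rewrite Nat.even_even.
          apply in_interval_code. rewrite qm1_val, qx_val. lra.
        * exists (2 * M + 1)%nat. unfold pj. rewrite (proj2 (Nat.ltb_ge _ _)) by lia. rewrite Nat.even_odd.
          apply in_interval_code. rewrite qp2_val, qx_val. lra.
      + intros [i Hi] Heq. unfold Aj in Heq. subst x. unfold pj in Hi. destruct (Nat.ltb i M).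
        * exact (in_interval0 _ Hi).
        * destruct (Nat.even i); apply in_interval_code in Hi; rewrite ?qm1_val, ?qx_val, ?qp2_val in Hi; lra. }
  assert (Hdj : mdom AUC Aj).
  { right. exists (xj n j). split; [apply xj_range; auto|]. intros y. unfold Aj. tauto. }
  assert (Hagree : agree M pj p0).
  { intros i Hi. unfold pj. rewrite (proj2 (Nat.ltb_lt _ _) Hi). reflexivity. }
  destruct (Hred G0 HG0 pj Aj Hpj Hdj) as [[HKj [Hvj _]] _].
  set (qj := papp K pj) in *.
  assert (Hqj : forall i, (i < 2 ^ (L + 2))%nat -> qj i = q0 i).
  { intros i Hi. pose proof (cK pj HKj i) as E1.
    pose proof (HM0 i Hi pj (agree_mono M0 M _ _ ltac:(unfold M; lia) Hagree)) as E2.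
    exact (eval_det _ _ _ _ E2 _ E1). }
  assert (Hn' : qj 0%nat = n).
  { apply Hqj. pose proof (Nat.pow_nonzero 2 (L + 2) ltac:(lia)). lia. }
  assert (HTj : forall w, (length w <= L)%nat -> Tq qj w = T w).
  { intros w Hw. unfold T, Tq. rewrite Hqj; auto. pose proof (enc_bound w).
    assert (2 ^ (length w + 1) <= 2 ^ (L + 1))%nat by (apply Nat.pow_le_mono_r; lia).
    replace (L + 2)%nat with (S (L + 1)) by lia. rewrite Nat.pow_succ_r'. lia. }
  destruct (valid_info qj Hvj) as [HTqj HmTqj]. rewrite Hn' in HmTqj.
  assert (ClC : exists Y, path (Tq qj) Y /\ T (prefix Y L) = true /\ excl j (prefix Y L)).
  { set (exb := fun w => if excluded_middle_informative (excl j w) then true else false).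
    set (Z := fun w => Tq qj w && (Nat.ltb (length w) L || (T (firstn L w) && exb (firstn L w)))).
    assert (HZ : isTree Z).
    { intros w u Hz. unfold Z in *. apply andb_prop in Hz as [H1 H2]. rewrite (HTqj w u H1). simpl.
      destruct (Nat.ltb (length w) L) eqn:El; auto. simpl.
      apply Nat.ltb_ge in El. rewrite length_app in H2.
      rewrite (proj2 (Nat.ltb_ge _ _)) in H2 by lia. simpl in H2.
      rewrite firstn_app in H2. replace (L - length w)%nat with 0%nat in H2 by lia.
      simpl in H2. rewrite app_nil_r in H2. exact H2. }
    destruct (classic (exists Y, path Z Y)) as [[Y HY]|Hno].
    - exists Y. split. { intros m. specialize (HY m). unfold Z in HY. apply andb_prop in HY; tauto. }
      specialize (HY L). unfold Z in HY. rewrite length_prefix, Nat.ltb_irrefl in HY.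
      rewrite firstn_all2 in HY by (rewrite length_prefix; lia). simpl in HY.
      apply andb_prop in HY as [_ HY]. apply andb_prop in HY as [H1 H2]. split; auto.
      unfold exb in H2. destruct (excluded_middle_informative _); auto; discriminate.
    - exfalso. destruct (koenig_contra Z HZ Hno) as [l0 Hl0].
      assert (Hc : forall d, (count (Tq qj) (L + (l0 + d)) <= count (ngb j) L * 2 ^ (l0 + d))%nat).
      { intros d. apply count_ext. intros w Hw Tw.
        assert (Zw : Z w = false).
        { destruct (Z w) eqn:E; auto. exfalso. pose proof (tree_firstn Z w l0 HZ E) as E'.
          rewrite Hl0 in E' by (rewrite length_firstn; lia). discriminate. }
        unfold Z in Zw. rewrite Tw in Zw. simpl in Zw. rewrite (proj2 (Nat.ltb_ge _ _)) in Zw by lia.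
        simpl in Zw.
        assert (Tf : T (firstn L w) = true).
        { rewrite <- HTj by (rewrite length_firstn; lia). apply tree_firstn; auto. }
        rewrite Tf in Zw. simpl in Zw. unfold ngb. rewrite Tf. unfold exb in Zw.
        destruct (excluded_middle_informative (excl j (firstn L w))); [discriminate|reflexivity]. }
      assert (Hb : forall m, (m >= L + l0)%nat -> level_measure (Tq qj) m <= (/2)^n).
      { intros m Hm. replace m with (L + (l0 + (m - L - l0)))%nat by lia.
        rewrite level_measure_count.
        apply lm_le_gen with (m := ((L - n) + (l0 + (m - L - l0)))%nat); [|lia].
        eapply Nat.le_trans; [apply Hc|]. rewrite (Nat.pow_add_r 2 (L - n)). apply Nat.mul_le_mono_r. exact Hcj. }
      destruct HmTqj as [lim [Hcv Hlt]]. pose proof (lim_le _ _ _ _ Hcv Hb). lra. }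
  destruct ClC as [Y [HY [TY EY]]].
  set (w := prefix Y L) in *.
  assert (Fw : FinP p0 eH k w) by (apply HLF; [apply length_prefix|exact TY]).
  assert (HGY := Gw_real qj Y (fun _ => HY)).
  destruct (Hred _ HGY pj Aj Hpj Hdj) as [[_ [_ HH]] [y [[_ Hy] Ay]]].
  change (pdom H (bpair pj (papp (Gw qj Y) qj))) in HH. rewrite Gw_at in HH.
  specialize (Hy k).
  change (Rabs (Q2R (decQ (papp H (bpair pj (papp (Gw qj Y) qj)) k)) - y) <= (/ 2) ^ k) in Hy.
  rewrite Gw_at in Hy.
  pose proof (cH _ HH k) as E1.
  assert (Hag : agree (length w) (bpair pj (cod Y)) (bpair p0 (wfun w))).
  { intros i Hi. unfold w in Hi. rewrite length_prefix in Hi. unfold bpair. destruct (Nat.even i).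
    - apply Hagree. pose proof (div2_lt i L Hi). unfold M. lia.
    - symmetry. apply wfun_prefix. apply div2_lt; auto. }
  pose proof (vF_spec p0 eH k w Fw _ Hag) as E2.
  pose proof (eval_det _ _ _ _ E2 _ E1) as Eq.
  rewrite Eq in Hy. change (y = xj n j) in Ay. subst y. unfold excl in EY. unfold v in EY. lra.
Qed.
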